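(* Fix $c\in\{1,\dots,K-1\}$ and suppose the density $\bar p_c$ satisfies the generation assumption $$\bar p_c(\bm x,\bar Y)=\binom{K-1}{c}^{-1}\sum_{y\notin \bar Y}p(\bm x,y)\qquad(\bm x\in\mathcal X,\ \bar Y\in\overline{\mathcal Y}_c).$$ Then for any loss function $\ell$ and any decision function $\bm g$ (for which the expectations below are finite), the classification risk satisfies $R(\bm g)=R_c(\bm g)$, where $$R_c(\bm g)=\mathbb E_{\bar p_c(\bm x,\bar Y)}\big[\bar\ell(\bm g(\bm x),\bar Y)\big],\qquad \bar\ell(\bm g(\bm x),\bar Y):=\sum_{y=1}^K\ell(\bm g(\bm x),y)-\frac{K-1}{|\bar Y|}\sum_{y\in\bar Y}\ell(\bm g(\bm x),y).$$
   Context: Let $K\ge 2$, $\mathcal X\subseteq\mathbb R^d$ the feature space and $\mathcal Y=\{1,\dots,K\}$ the label space. Let $p(\bm x,y)$ be a joint density on $\mathcal X\times\mathcal Y$ with marginal density $p(\bm x)$. For $c\in\{1,\dots,K-1\}$, $\overline{\mathcal Y}_c$ denotes the collection of all $c$-element subsets of $\{1,\dots,K\}$ (''complementary-label sets'' of size $c$), and $\bar p_c(\bm x,\bar Y)$ is a density on $\mathcal X\times\overline{\mathcal Y}_c$. A decision function is a map $\bm g:\mathcal X\to\mathbb R^K$, a loss is a function $\ell:\mathbb R^K\times\mathcal Y\to[0,\infty)$, and the classification risk is $R(\bm g)=\mathbb E_{p(\bm x,y)}[\ell(\bm g(\bm x),y)]$. *)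

(* Defs.v *)
From HB Require Import structures.
From mathcomp Require Import all_boot all_order all_algebra.
Set Implicit Arguments. Unset Strict Implicit. Unset Printing Implicit Defensive.
Import Order.TTheory GRing.Theory Num.Theory.
Local Open Scope ring_scope.

(* Labels y in {1..K} are represented by 'I_K (i.e. {0..K-1}).
   Complementary-label sets are finite sets {set 'I_K}; the collection
   \bar{Y}_c is those of cardinality c.
   Expectation over x is modelled by an arbitrary functional
   integ : (X -> R) -> R (e.g. Lebesgue integration over X against dx);
   E_{p(x,y)}[f(x,y)] = integ (fun x => \sum_y p x y * f x y). *)

Definition risk (R : realFieldType) (K : nat) (X : Type)
  (integ : (X -> R) -> R) (p : X -> 'I_K -> R)
  (loss : 'rV[R]_K -> 'I_K -> R) (g : X -> 'rV[R]_K) : R :=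
  integ (fun x => \sum_(y < K) p x y * loss (g x) y).

Definition comp_loss (R : realFieldType) (K : nat)
  (loss : 'rV[R]_K -> 'I_K -> R) (v : 'rV[R]_K) (Yb : {set 'I_K}) : R :=
  \sum_(y < K) loss v y - (K.-1)%:R / (#|Yb|)%:R * \sum_(y in Yb) loss v y.

Definition risk_c (R : realFieldType) (K : nat) (X : Type) (c : nat)
  (integ : (X -> R) -> R) (pbar : X -> {set 'I_K} -> R)
  (loss : 'rV[R]_K -> 'I_K -> R) (g : X -> 'rV[R]_K) : R :=
  integ (fun x => \sum_(Yb : {set 'I_K} | #|Yb| == c)
                     pbar x Yb * comp_loss loss (g x) Yb).

(* Main.v *)
Require Import Defs.
From HB Require Import structures.
From mathcomp Require Import all_boot all_order all_algebra.
Import Order.TTheory GRing.Theory Num.Theory.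
Local Open Scope ring_scope.
From mathcomp Require Import ring zify.
From Stdlib Require Import FunctionalExtensionality.
Lemma cnt (R : realFieldType) K c (B : {set 'I_K}) :
  \sum_(Y : {set 'I_K} | #|Y| == c) ((Y \subset B)%:R : R) = ('C(#|B|, c))%:R.
Proof.
rewrite -cards_draws -sum1_card natr_sum big_mkcond /= [RHS]big_mkcond /=.
apply: eq_bigr => Y _; rewrite inE andbC.
by case: (#|Y| == c); case: (Y \subset B).
Qed.

Lemma sub1 K (Y : {set 'I_K}) y : (Y \subset [set~ y]) = (y \notin Y).
Proof.
apply/subsetP/idP => [H|H z Hz]; last first.
  by rewrite !inE; apply: contraNneq H => <-.
by apply/negP => /H; rewrite !inE eqxx.
Qed.

Lemma sub2 K (Y : {set 'I_K}) y z :
  (Y \subset ~: [set y; z]) = (y \notin Y) && (z \notin Y).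
Proof.
apply/subsetP/andP => [H|[H1 H2] w Hw]; last first.
  rewrite !inE negb_or; apply/andP; split.
    by apply: contraNneq H1 => <-.
  by apply: contraNneq H2 => <-.
split; apply/negP => /H; by rewrite !inE eqxx ?orbT.
Qed.
Lemma point (R : realFieldType) k m (P L : 'I_k.+2 -> R) (pb : {set 'I_k.+2} -> R) :
  (m <= k)%N ->
  (forall Y : {set 'I_k.+2}, #|Y| = m.+1 -> pb Y = ('C(k.+1, m.+1))%:R^-1 * \sum_(y in ~: Y) P y) ->
  \sum_(y < k.+2) P y * L y =
  \sum_(Y : {set 'I_k.+2} | #|Y| == m.+1)
     pb Y * (\sum_(y < k.+2) L y - (k.+2).-1%:R / (#|Y|)%:R * \sum_(y in Y) L y).
Proof.
move=> hmk H.
set N : R := ('C(k.+1, m.+1))%:R.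
set M : R := ('C(k, m))%:R.
set S := \sum_(y < k.+2) L y.
set a : R := (k.+1)%:R / (m.+1)%:R.
have Nn0 : N != 0 by rewrite /N pnatr_eq0 -lt0n bin_gt0.
have mn0 : (m.+1)%:R != 0 :> R by rewrite pnatr_eq0.
have key : N^-1 * a * M = 1.
  have e : ((k.+1) * 'C(k, m))%:R = ((m.+1) * 'C(k.+1, m.+1))%:R :> R.
    by rewrite -mul_bin_diag.
  rewrite !natrM in e. rewrite /a /M -/N.
  apply: (mulfI Nn0); rewrite mulr1 !mulrA mulfV // mul1r.
  by rewrite mulrAC e mulrAC mulfV // mul1r.
transitivity (\sum_(Y : {set 'I_k.+2} | #|Y| == m.+1) \sum_(y < k.+2)
   P y * (N^-1 * S * ((Y \subset [set~ y]))%:R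
          - N^-1 * a * \sum_(z < k.+2) L z *
              ((Y \subset [set~ y])%:R - (Y \subset ~: [set y; z])%:R))); last first.
  apply: eq_bigr => Y /eqP hY.
  rewrite H // hY.
  have e1 : \sum_(y in ~: Y) P y = \sum_(y < k.+2) P y * (y \notin Y)%:R.
    rewrite big_mkcond /=; apply: eq_bigr => y _; rewrite inE.
    by case: (y \in Y); rewrite ?mulr1 ?mulr0.
  have e2 : \sum_(y in Y) L y = \sum_(y < k.+2) L y * (y \in Y)%:R.
    rewrite big_mkcond /=; apply: eq_bigr => y _.
    by case: (y \in Y); rewrite ?mulr1 ?mulr0.
  rewrite e1 e2 -/N -(mulrA N^-1) mulr_suml mulr_sumr; apply: eq_bigr => y _.
  have e3 : \sum_(z < k.+2) L z *
        ((Y \subset [set~ y])%:R - (Y \subset ~: [set y; z])%:R)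
        = (y \notin Y)%:R * \sum_(z < k.+2) L z * (z \in Y)%:R :> R.
    rewrite mulr_sumr; apply: eq_bigr => z _; rewrite sub1 sub2.
    by case: (y \in Y); case: (z \in Y); rewrite /=; ring.
  rewrite e3 sub1 /a /S /=. ring.
rewrite exchange_big /=; apply: eq_bigr => y _.
rewrite -mulr_sumr sumrB -!mulr_sumr.
have c1 : \sum_(Y : {set 'I_k.+2} | #|Y| == m.+1) ((Y \subset [set~ y])%:R : R) = N.
  by rewrite cnt cardsC1 card_ord.
rewrite c1.
rewrite exchange_big /=.
have c2 : forall z, \sum_(Y : {set 'I_k.+2} | #|Y| == m.+1)
    (L z * ((Y \subset [set~ y])%:R - (Y \subset ~: [set y; z])%:R))
    = L z * (if z == y then 0 else M).
  move=> z; rewrite -mulr_sumr sumrB c1 cnt.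
  have hc := cardsC [set y; z]; rewrite cards2 card_ord in hc.
  case: (eqVneq z y) => [ezy|hzy].
    subst z. rewrite eqxx /= add1n in hc. case: hc => ->.
    by rewrite /N subrr mulr0.
  rewrite eq_sym hzy /= !addSn add0n in hc. case: hc => ->.
  rewrite /N /M binS natrD; ring.
rewrite (eq_bigr _ (fun z _ => c2 z)) (bigD1 y) //= eqxx mulr0 add0r.
have c3 : \sum_(i < k.+2 | i != y) L i * (if i == y then 0 else M)
    = M * (S - L y).
  rewrite /S [in RHS](bigD1 y) //= addrC addrK mulr_sumr; apply: eq_bigr => i /negbTE ->.
  by rewrite mulrC.
rewrite c3.
have e : N^-1 * a * (M * (S - L y)) = S - L y by rewrite mulrA key mul1r.
rewrite e mulrAC mulVf // mul1r. congr (_ * _). ring.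
Qed.

Theorem lemma1 (R : realFieldType) (K : nat) (X : Type)
  (integ : (X -> R) -> R)
  (p : X -> 'I_K -> R) (pbar : X -> {set 'I_K} -> R) (c : nat)
  (loss : 'rV[R]_K -> 'I_K -> R) (g : X -> 'rV[R]_K) :
  (2 <= K)%N ->
  (1 <= c <= K.-1)%N ->
  (forall x y, 0 <= p x y) ->
  (forall v y, 0 <= loss v y) ->
  (forall x (Yb : {set 'I_K}), #|Yb| = c ->
     pbar x Yb = ('C(K.-1, c))%:R^-1 * \sum_(y in ~: Yb) p x y) ->
  risk integ p loss g = risk_c c integ pbar loss g.
Proof.
case: K p pbar loss g => [|[|k]] // p pbar loss g _.
case: c => [|m] // /andP [_ hm] _ _ H.
rewrite /risk /risk_c; congr integ; apply: functional_extensionality => x.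
rewrite (@point R k m (p x) (loss (g x)) (pbar x) hm (H x)).
by apply: eq_bigr => Y _; rewrite /comp_loss.
Qed.
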